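(* Let $\mathbf B$ be a basic algebra over an algebraically closed field $\mathbbm k$ with $\mathbf B/\operatorname{rad}\mathbf B=\prod_{k=1}^m\bar{\mathbf B}_k$, $\bar{\mathbf B}_k\cong\mathbbm k$. (1) If $\mathbf A$ is obtained from $\mathbf B$ by gluing the components $\bar{\mathbf B}_i$ and $\bar{\mathbf B}_j$, then $\mathbf A$ is basic, $\mathbf A/\operatorname{rad}\mathbf A=\bar{\mathbf A}_{ij}\times\prod_{k\notin\{i,j\}}\bar{\mathbf B}_k$ where $\bar{\mathbf A}_{ij}=\{(\lambda,\lambda):\lambda\in\mathbbm k\}\subset\bar{\mathbf B}_i\times\bar{\mathbf B}_j$, $\operatorname{rad}\mathbf A=\operatorname{rad}\mathbf B$, and $\mathbf B\otimes_{\mathbf A}\bar{\mathbf A}_{ij}\cong\bar{\mathbf B}_i\times\bar{\mathbf B}_j$. (2) If $\mathbf A$ is obtained from $\mathbf B$ by blowing up the component $\bar{\mathbf B}_i$, then $\mathbf A$ is basic, $\mathbf A/\operatorname{rad}\mathbf A=\bar{\mathbf A}_{i1}\times\bar{\mathbf A}_{i2}\times\prod_{k\ne i}\bar{\mathbf B}_k$ where $\bar{\mathbf A}_{is}=\{\lambda e_{ss}:\lambda\in\mathbbm k\}$ and $e_{ss}$ ($s\in\{1,2\}$) are the diagonal matrix units of $\bar{\mathbf B}'_i\cong\mathrm{Mat}(2,\mathbbm k)$; moreover $\operatorname{rad}\mathbf A=\operatorname{rad}\mathbf B'$ and $\mathbf B'\otimes_{\mathbf A}\bar{\mathbf A}_{is}\cong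 V$, where $V$ is the simple $\bar{\mathbf B}'_i$-module.
   Context: Gluing: the algebra obtained from $\mathbf B$ by gluing $\bar{\mathbf B}_i,\bar{\mathbf B}_j$ ($i\ne j$) is the preimage in $\mathbf B$ of $\{(\lambda_1,\dots,\lambda_m)\in\mathbf B/\operatorname{rad}\mathbf B:\lambda_i=\lambda_j\}$. Blowing up: let $\mathbf B_k$ be the indecomposable right projective $\mathbf B$-modules corresponding to $\bar{\mathbf B}_k$, $P=2\mathbf B_i\oplus\bigoplus_{k\ne i}\mathbf B_k$, $\mathbf B'=\operatorname{End}_{\mathbf B}P$, $\mathbf B'/\operatorname{rad}\mathbf B'=\prod_k\bar{\mathbf B}'_k$ with $\bar{\mathbf B}'_i\cong\mathrm{Mat}(2,\mathbbm k)$ and $\bar{\mathbf B}'_k\cong\mathbbm k$ ($k\ne i$); the algebra obtained by blowing up $\bar{\mathbf B}_i$ is the preimage in $\mathbf B'$ of the subalgebra of tuples $(b_1,\dots,b_m)$ with $b_i$ diagonal. The modules $\bar{\mathbf A}_{ij}$, $\bar{\mathbf A}_{is}$ are regarded as simple $\mathbf A$-modules. *)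

(* Defs.v *)
From HB Require Import structures.
From mathcomp Require Import all_boot all_algebra all_field.
Set Implicit Arguments.
Unset Strict Implicit.
Unset Printing Implicit Defensive.
Import GRing.Theory.
Local Open Scope ring_scope.

Section Algebras.
Variables (K : fieldType) (L : falgType K).

Definition is_ideal (S : {aspace L}) (J : {vspace L}) : bool :=
  [&& (J <= S)%VS, (S * J <= J)%VS & (J * S <= J)%VS].

Definition nilpotent_space (J : {vspace L}) : Prop :=
  exists n : nat, (J ^+ n)%VS = 0%VS.

Definition is_rad (S : {aspace L}) (R : {vspace L}) : Prop :=
  [/\ is_ideal S R, nilpotent_space R &
      forall J : {vspace L}, is_ideal S J -> nilpotent_space J -> (J <= R)%VS].

(* "S is basic and S / rad S = prod_{k in I} S_k with S_k = k", the
   identification being given by the family of characters chi: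
   x + rad S |-> (chi k x)_k is an isomorphism S / rad S ~ K^I of algebras. *)
Definition basic_decomp (S : {aspace L}) (I : finType)
    (chi : I -> 'Hom(L, K^o)) : Prop :=
  [/\ forall k, chi k (algid S) = 1 :> K,
      forall k, {in S &, forall x y, chi k (x * y) = (chi k x : K) * chi k y},
      forall lam : I -> K, exists2 x, x \in S & forall k, chi k x = lam k :> K
    & is_rad S (S :&: \bigcap_(k : I) lker (chi k))%VS ].

(* The subspace N of S spanned by the balancing relations  b a - psi(a) b
   (b in S, a in T), where T is a subalgebra of S and the simple
   T-module K is given by the character psi of T.  By definition of the
   balanced tensor product, S (x)_T K = S / N  as left S-modules. *)
Definition bal_tensor_ker (S T : {aspace L}) (psi : 'Hom(L, K^o))
    : {vspace L} :=
  (S * (linfun (fun a : L => a - (psi a : K) *: algid T) @: T))%VS.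

(* The left S-module S / N is isomorphic to the module K^d on which S
   acts through rho (column vectors). *)
Definition quot_module_iso (S : {aspace L}) (N : {vspace L}) (d : nat)
    (rho : L -> 'M[K]_d) : Prop :=
  exists f : 'Hom(L, 'cV[K]_d),
    [/\ forall v : 'cV[K]_d, exists2 x, x \in S & f x = v,
        forall x, x \in S -> (f x == 0) = (x \in N)
      & {in S &, forall b x, f (b * x) = rho b *m f x} ].

End Algebras.

(* P = 2 B_i (+) (+)_{k <> i} B_k is realised as the subspace of
   W = B^(m+1) of tuples w with w_a in e_(dbl a) B, where the index
   a : 'I_(m+1) is sent to the component dbl i a : 'I_m; the two copies
   of B_i are the indices  widen_ord i  and  ord_max. *)
Definition dbl (m : nat) (i : 'I_m) (a : 'I_m.+1) : 'I_m :=
  if unlift ord_max a is Some k then k else i.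

Definition idx1 (m : nat) (i : 'I_m) : 'I_m.+1 := widen_ord (leqnSn m) i.
Definition idx2 (m : nat) : 'I_m.+1 := ord_max.

Section BlowUp.
Variables (K : fieldType) (B : falgType K) (m : nat) (i : 'I_m)
          (e : 'I_m -> B).

Definition Wsp := {ffun 'I_m.+1 -> B}.

Definition ract (w : Wsp) (b : B) : Wsp := [ffun a => w a * b].

Definition inP (w : Wsp) : Prop := forall a, e (dbl i a) * w a = w a.
Definition inC (w : Wsp) : Prop := forall a, e (dbl i a) * w a = 0.

(* End_B(P), each endomorphism extended by 0 on the complement *)
Definition endB (f : 'End(Wsp)) : Prop :=
  [/\ forall w, inC w -> f w = 0,
      forall w, inP (f w)
    & forall w b, f (ract w b) = ract (f w) b].

(* identity of End_B(P): the projection onto P along the complement *)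
Definition projP : 'End(Wsp) :=
  linfun (fun w : Wsp => [ffun a => e (dbl i a) * w a] : Wsp).

Definition delta (b : 'I_m.+1) (x : B) : Wsp :=
  [ffun c => if c == b then x else 0].

(* the (a,b) Peirce entry of f in e_(dbl a) B e_(dbl b) = Hom_B(P_b, P_a) *)
Definition entry (a b : 'I_m.+1) (f : 'End(Wsp)) : B :=
  f (delta b (e (dbl i b))) a.

Definition is_End_of_P (L' : falgType K) (B' : {aspace L'})
    (phi : 'Hom(L', 'End(Wsp))) : Prop :=
  [/\ {in B' &, injective phi},
      forall x, x \in B' -> endB (phi x),
      forall f, endB f -> exists2 x, x \in B' & phi x = f,
      {in B' &, forall x y, phi (x * y) = (phi x \o phi y)%VF}
    & phi (algid B') = projP].

End BlowUp.

(* Main.v *)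
Require Import Defs.
From HB Require Import structures.
From mathcomp Require Import all_boot all_algebra all_field ring.
Import GRing.Theory.
Local Open Scope ring_scope.

Set Implicit Arguments. Unset Strict Implicit.

Section Idx.
Variables (m : nat) (i : 'I_m).

Lemma dbl_lift k : dbl i (lift ord_max k) = k.
Proof. by rewrite /dbl liftK. Qed.

Lemma dbl_max : dbl i ord_max = i.
Proof. by rewrite /dbl unlift_none. Qed.

Lemma idx1E : idx1 i = lift ord_max i.
Proof. by apply: val_inj; rewrite /= /bump leqNgt ltn_ord. Qed.

Lemma dbl_idx1 : dbl i (idx1 i) = i.
Proof. by rewrite idx1E dbl_lift. Qed.

Lemma dbl_idx2 : dbl i (idx2 m) = i.
Proof. exact: dbl_max. Qed.

Lemma idx12 : idx1 i != idx2 m.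
Proof. by rewrite -val_eqE /= ltn_eqF. Qed.

Lemma dbl_eqi a : (dbl i a == i) = (a == idx1 i) || (a == idx2 m).
Proof.
case: (unliftP ord_max a) => [k ->|->]; last by rewrite dbl_max /idx2 !eqxx orbT.
rewrite dbl_lift idx1E (inj_eq (@lift_inj _ _)).
by rewrite /idx2 [lift _ _ == _]eq_sym (negbTE (neq_lift _ _)) orbF.
Qed.

Lemma dbl_inj a b : dbl i a = dbl i b -> a = b \/ dbl i a = i.
Proof.
case: (unliftP ord_max a) => [k ->|->]; last by rewrite dbl_max; right.
case: (unliftP ord_max b) => [k' ->|->]; rewrite ?dbl_lift ?dbl_max.
  by move=> ->; left.
by right.
Qed.

End Idx.


Lemma linfunE (K : fieldType) (aT rT : vectType K) (f : aT -> rT) :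
  linear f -> linfun f =1 f.
Proof.
move=> lf x.
exact: (lfunE (HB.pack f (GRing.isLinear.Build K aT rT _ f lf)) x).
Qed.

Section Gen.
Variables (K : fieldType) (L : falgType K).
Implicit Types (J U R : {vspace L}) (S : {aspace L}).

Lemma memvX J v n : v \in J -> v ^+ n \in (J ^+ n)%VS.
Proof.
move=> Jv; elim: n => [|n IH]; first by rewrite expr0 expv0 memv_line.
by rewrite exprS expvSl memv_mul.
Qed.

Lemma memv_bigcapP (I : finType) (Us : I -> {vspace L}) x :
  reflect (forall k, x \in Us k) (x \in \bigcap_(k : I) Us k)%VS.
Proof.
rewrite memvE; apply: (iffP subv_bigcapP) => H k.
  by rewrite memvE; apply: H.
by move=> _; rewrite -memvE.
Qed.

Lemma nil_sub S (c : 'Hom(L, K^o)) J :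
  {in S &, forall x y, c (x * y) = (c x : K) * c y} ->
  (J <= S)%VS -> nilpotent_space J -> (J <= lker c)%VS.
Proof.
move=> cM JS [n Jn]; apply/subvP=> v Jv; rewrite memv_ker.
have Sv : v \in S by apply: (subvP JS).
have : v ^+ n.+1 \in (J ^+ n.+1)%VS by apply: memvX.
rewrite expvSr Jn prod0v memv0 => /eqP v0.
have H k : v ^+ k.+1 \in S /\ c (v ^+ k.+1) = (c v : K) ^+ k.+1.
  elim: k => [|k [Sk ck]]; first by rewrite !expr1.
  by rewrite exprSr memvM // cM // ck -exprSr.
have [_ ] := H n; rewrite v0 linear0 => /esym/eqP.
by rewrite expf_eq0 /=.
Qed.

Lemma max_gen S (I : finType) (c : I -> 'Hom(L, K^o)) J :
  (forall k, {in S &, forall x y, c k (x * y) = (c k x : K) * c k y}) ->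
  (J <= S)%VS -> nilpotent_space J ->
  (J <= S :&: \bigcap_(k : I) lker (c k))%VS.
Proof.
move=> cM JS nJ; rewrite subv_cap JS; apply/subv_bigcapP => k _.
exact: (@nil_sub S (c k) J (cM k) JS nJ).
Qed.

Lemma rad_uniq (S : {aspace L}) (R1 R2 : {vspace L}) : is_rad S R1 -> is_rad S R2 -> R1 = R2.
Proof.
move=> [i1 n1 m1] [i2 n2 m2]; apply: subv_anti.
by rewrite m2 // m1.
Qed.

End Gen.

Unset Implicit Arguments.

Section Part1.
Variables (K : fieldType) (B : falgType K) (m : nat)
    (chi : 'I_m -> 'Hom(B, K^o))
    (hB : basic_decomp {:B}%AS chi).

Let RB : {vspace B} := (fullv :&: \bigcap_(k : 'I_m) lker (chi k))%VS.

Lemma chiM k x y : chi k (x * y) = (chi k x : K) * chi k y.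
Proof. by case: hB => _ hM _ _; apply: hM; rewrite memvf. Qed.

Lemma algidf : algid {:B}%AS = 1.
Proof. by apply/eqP; rewrite algid_eq1 memvf. Qed.

Lemma chi1 k : chi k 1 = 1 :> K.
Proof. by case: hB => h1 _ _ _; rewrite -algidf h1. Qed.

Lemma memRB x : (x \in RB) = [forall k, chi k x == 0].
Proof.
rewrite memv_cap memvf /=; apply/memv_bigcapP/forallP => H k.
  by rewrite -memv_ker.
by rewrite memv_ker.
Qed.

Lemma radB : is_rad {:B}%AS RB.
Proof. by case: hB. Qed.

Lemma part1 (i j : 'I_m) : i != j ->
   forall A : {aspace B}, (A : {vspace B}) = lker (chi i - chi j) ->
   [/\ basic_decomp A (fun k : {k : 'I_m | k != j} => chi (val k)),
       forall R : {vspace B}, is_rad {:B}%AS R -> is_rad A R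
     & quot_module_iso {:B}%AS (bal_tensor_ker {:B}%AS A (chi i))
         (fun b : B => diag_mx (\row_(r < 2)
            (if r == ord0 then (chi i b : K) else (chi j b : K))))].
Proof.
move=> ij A hA.
have memA x : (x \in A) = (chi i x == chi j x :> K).
  by rewrite hA memv_ker !lfun_simp subr_eq0.
have A1 : 1 \in A by rewrite memA !chi1.
have algA : algid A = 1 by apply/eqP; rewrite algid_eq1.
have RBA : (RB <= A)%VS.
  apply/subvP=> x; rewrite memRB memA => /forallP H.
  by rewrite (eqP (H i)) (eqP (H j)).
have radA : is_rad A RB.
  case: radB => [/and3P[_ h1 h2] nRB mx]; split => //.
    apply/and3P; split => //.
      by apply: subv_trans h1; apply: prodvSl; apply: subvf.
    by apply: subv_trans h2; apply: prodvSr; apply: subvf.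
  move=> J _ nJ.
  have := @max_gen K B {:B}%AS _ chi J (fun k x y _ _ => chiM k x y) (subvf J) nJ.
  by [].
have eqR : (A :&: \bigcap_(k : {k : 'I_m | k != j}) lker (chi (val k)))%VS = RB.
  apply: subv_anti; apply/andP; split; apply/subvP => x.
    move/memv_capP => [Ax /memv_bigcapP H]; rewrite memRB; apply/forallP => k.
    have Hk (k' : 'I_m) : k' != j -> chi k' x == 0.
      by move=> kj; have := H (exist _ k' kj); rewrite memv_ker.
    case: (eqVneq k j) => [->|kj]; last exact: Hk.
    by move: Ax; rewrite memA => /eqP <-; apply: Hk.
  move=> xR; rewrite memv_cap (subvP RBA) //=; apply/memv_bigcapP => k.
  by move: xR; rewrite memRB memv_ker => /forallP.
split.
- split.
  + by move=> k; rewrite algA chi1.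
  + by move=> k x y _ _; apply: chiM.
  + move=> lam.
    pose i0 : {k : 'I_m | k != j} := exist _ i ij.
    pose lam' k := if k == j then lam i0 else lam (insubd i0 k).
    case: hB => _ _ hS _; have [x _ Hx] := hS lam'.
    exists x.
      rewrite memA !Hx /lam' eqxx (negbTE ij); apply/eqP; congr (lam _).
      by apply: val_inj; rewrite val_insubd ij.
    move=> k; rewrite Hx /lam' (negbTE (valP k)) valKd //.
  + by rewrite eqR.
- by move=> R hR; rewrite (rad_uniq hR (radB)); exact: radA.
pose f := fun x : B => \col_(r < 2) (if r == ord0 then (chi i x : K) else (chi j x : K)).
have lf : linear f.
  move=> a x y; apply/matrixP => r c; rewrite !mxE.
  by case: ifP => _; rewrite linearP.
exists (linfun f); split.
- move=> v; case: hB => _ _ hS _.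
  have [x _ Hx] := hS (fun k => if k == i then v 0 0 else if k == j then v 1 0 else 0).
  exists x; first exact: memvf.
  rewrite linfunE //; apply/matrixP => r c; rewrite !mxE !Hx eqxx.
  idtac.
  rewrite ord1; case: r => [[|[|r]]] //= Hr.
    by rewrite (_ : Ordinal Hr = 0) //; apply: val_inj.
  by rewrite eq_sym (negbTE ij) eqxx (_ : Ordinal Hr = 1) //; apply: val_inj.
- move=> x _.
  have lg : linear (fun a : B => a - (chi i a : K) *: algid A).
    by move=> a y z; rewrite linearP scalerBr scalerA addrACA -opprD -scalerDl.
  rewrite linfunE //; apply/idP/idP.
  + move/eqP/matrixP => H.
    have Hi := H 0 0; have Hj := H 1 0; rewrite !mxE /= in Hi Hj.
    have Ax : x \in A by rewrite memA Hi Hj.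
    rewrite -[x]mul1r; apply: memv_mul; first exact: memvf.
    have -> : x = linfun (fun a : B => a - (chi i a : K) *: algid A) x.
      by rewrite linfunE // Hi scale0r subr0.
    exact: memv_img.
  + move=> xN; apply/eqP.
    suff : x \in lker (linfun f) by rewrite memv_ker linfunE // => /eqP.
    move: x xN; apply/subvP; apply/prodvP => b v _ /memv_imgP [a Aa ->].
    rewrite memv_ker linfunE // linfunE //; apply/eqP/matrixP => r c.
    rewrite !mxE algA; move: Aa; rewrite memA => /eqP Ea.
    by case: ifP => _; rewrite chiM linearB linearZ /= chi1 /GRing.scale /= ?Ea; ring.
- move=> b x _ _; rewrite !linfunE //; apply/matrixP => r c.
  rewrite mul_diag_mx !mxE chiM.
  by case: (r == ord0); rewrite ?chiM.
Qed.

End Part1.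

Set Implicit Arguments. Unset Strict Implicit.

Section Blow.
Variables (K : fieldType) (B : falgType K) (m : nat)
    (chi : 'I_m -> 'Hom(B, K^o))
    (hB : basic_decomp {:B}%AS chi) (i : 'I_m) (e : 'I_m -> B)
    (eM : forall k l, e k * e l = (if k == l then e k else 0))
    (e1 : \sum_(k < m) e k = 1)
    (che : forall k l, chi l (e k) = (k == l)%:R :> K).

Local Notation W := (Wsp B m).
Local Notation ek a := (e (dbl i a)).

Lemma ee k : e k * e k = e k. Proof. by rewrite eM eqxx. Qed.

Lemma deltaE (b : 'I_m.+1) (x : B) c : delta b x c = if c == b then x else 0.
Proof. by rewrite ffunE. Qed.

Lemma ractE (w : W) (y : B) a : ract w y a = w a * y.
Proof. by rewrite ffunE. Qed.

Lemma projPE (w : W) a : projP i e w a = ek a * w a.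
Proof.
rewrite /projP linfunE ?ffunE //.
by move=> k u v; apply/ffunP => c; rewrite !ffunE mulrDr scalerAr.
Qed.

Lemma chi_off l y k k' : k != k' -> chi l (e k * y * e k') = 0 :> K.
Proof.
move=> kk'; rewrite !chiM // !che.
case: (eqVneq k l) => [kl|kl].
  by rewrite -kl eq_sym (negbTE kk') mulr0.
by rewrite !mul0r.
Qed.

Section EndB.
Variable f : 'End(W).
Hypothesis hf : endB i e f.

Lemma entryl a b : ek a * entry i e a b f = entry i e a b f.
Proof. by case: hf => _ hP _; apply: hP. Qed.

Lemma entryr a b : entry i e a b f * ek b = entry i e a b f.
Proof.
case: hf => _ _ hR; rewrite /entry -ractE -hR; congr (f _ a).
by apply/ffunP => c; rewrite !ffunE; case: ifP; rewrite ?ee ?mul0r.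
Qed.

Lemma expandE (w : W) a : f w a = \sum_b entry i e a b f * w b.
Proof.
case: hf => hC _ hR.
have -> : f w = f (\sum_b delta b (w b)).
  congr (f _); apply/ffunP => c; rewrite sum_ffunE (bigD1 c) //= big1 => [|b bc].
    by rewrite ffunE eqxx addr0.
  by rewrite ffunE eq_sym (negbTE bc).
rewrite linear_sum sum_ffunE; apply: eq_bigr => b _.
have -> : delta b (w b) = ract (delta b (ek b)) (w b) + delta b (w b - ek b * w b).
  by apply/ffunP => c; rewrite !ffunE; case: ifP; rewrite ?mul0r ?add0r // addrC subrK.
rewrite linearD /= hR (hC (delta b (w b - ek b * w b))) ?addr0; last first.
  move=> c; rewrite ffunE; case: ifP => [/eqP ->|]; last by rewrite mulr0.
  by rewrite mulrBr mulrA ee subrr.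
by rewrite ractE.
Qed.

Lemma entry_comp (g : 'End(W)) a b :
  entry i e a b (f \o g)%VF = \sum_c entry i e a c f * entry i e c b g.
Proof. by rewrite /entry comp_lfunE expandE. Qed.

End EndB.

Lemma endB_eq f g : endB i e f -> endB i e g ->
  (forall a b, entry i e a b f = entry i e a b g) -> f = g.
Proof.
move=> hf hg H; apply/lfunP => w; apply/ffunP => a.
by rewrite !expandE //; apply: eq_bigr => b _; rewrite H.
Qed.

Definition mkf (M : 'I_m.+1 -> 'I_m.+1 -> B) (w : W) : W :=
  [ffun c => \sum_b ek c * M c b * ek b * w b].

Lemma mkf_lin M : linear (mkf M).
Proof.
move=> k u v; apply/ffunP => c; rewrite !ffunE scaler_sumr -big_split.
by apply: eq_bigr => b _; rewrite !ffunE mulrDr scalerAr.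
Qed.

Definition mk M : 'End(W) := linfun (mkf M).

Lemma mkE M w c : mk M w c = \sum_b ek c * M c b * ek b * w b.
Proof. by rewrite /mk linfunE ?ffunE //; apply: mkf_lin. Qed.

Lemma mk_endB M : endB i e (mk M).
Proof.
split.
- move=> w hC; apply/ffunP => c; rewrite mkE ffunE big1 // => b _.
  by rewrite -mulrA hC mulr0.
- move=> w a; rewrite !mkE mulr_sumr; apply: eq_bigr => b _.
  by rewrite !mulrA ee.
- move=> w y; apply/ffunP => c; rewrite ffunE !mkE mulr_suml.
  by apply: eq_bigr => b _; rewrite ffunE mulrA.
Qed.

Lemma mk_entry M a b : entry i e a b (mk M) = ek a * M a b * ek b.
Proof.
rewrite /entry mkE (bigD1 b) //= big1 => [|c cb].
  by rewrite ffunE eqxx -mulrA ee addr0.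
by rewrite ffunE (negbTE cb) mulr0.
Qed.


Lemma chiM' k x y : chi k (x * y) = (chi k x : K) * chi k y.
Proof. exact: chiM. Qed.

Lemma chiX k y n : chi k (y ^+ n) = (chi k y : K) ^+ n.
Proof.
elim: n => [|n IH]; first by rewrite !expr0 chi1.
by rewrite !exprS chiM' IH.
Qed.

Lemma entry_projP a b : entry i e a b (projP i e) = if a == b then ek a else 0.
Proof.
rewrite /entry projPE deltaE; case: ifP => [/eqP ->|]; first by rewrite ee.
by rewrite mulr0.
Qed.

Lemma entry_lin a b : linear (entry i e a b).
Proof. by move=> k f g; rewrite /entry !lfun_simp !ffunE. Qed.

Section Phi.
Variables (L' : falgType K) (B' : {aspace L'})
          (phi : 'Hom(L', 'End(W))) (hE : is_End_of_P i e B' phi)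
          (A : {aspace L'})
          (hA : forall x, x \in A =
      [&& x \in B', chi i (entry i e (idx1 i) (idx2 m) (phi x)) == 0
                  & chi i (entry i e (idx2 m) (idx1 i) (phi x)) == 0]).

Local Notation E x a b := (entry i e a b (phi x)).

Lemma phi_endB x : x \in B' -> endB i e (phi x).
Proof. by case: hE => _ h _ _ _; apply: h. Qed.

Lemma phiM x y : x \in B' -> y \in B' -> phi (x * y) = (phi x \o phi y)%VF.
Proof. by case: hE => _ _ _ h _; apply: h. Qed.

Lemma phi_surj f : endB i e f -> exists2 x, x \in B' & phi x = f.
Proof. by case: hE => _ _ h _ _; apply: h. Qed.

Lemma phi_inj0 x : x \in B' -> phi x = 0 -> x = 0.
Proof.
case: hE => h _ _ _ _ Bx p0; apply: h => //; first exact: mem0v.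
by rewrite p0 linear0.
Qed.

Lemma phi1 : phi (algid B') = projP i e.
Proof. by case: hE. Qed.

Lemma AB' : (A <= B')%VS.
Proof. by apply/subvP => x; rewrite hA => /and3P[]. Qed.

Lemma algidA : algid A = algid B'.
Proof.
have hAl : algid B' \in A.
  rewrite hA memv_algid phi1 !entry_projP; have h12 := idx12 i.
  by rewrite ifN // ifN 1?eq_sym // raddf0 eqxx.
have hAB : algid A \in B' by exact: (subvP AB') (memv_algid A).
by rewrite -{1}(algidr hAB) (algidl hAl).
Qed.

Lemma Elin a b k : linear (fun x : L' => (chi k (E x a b) : K^o)).
Proof. by move=> c x y; rewrite linearP /= entry_lin linearP. Qed.

Lemma Esand x a b : x \in B' -> ek a * E x a b * ek b = E x a b.
Proof. by move=> Bx; rewrite entryl ?entryr //; apply: phi_endB. Qed.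

Lemma chiE_off x a b l : x \in B' -> dbl i a != dbl i b -> chi l (E x a b) = 0 :> K.
Proof. by move=> Bx ab; rewrite -Esand // chi_off. Qed.

Lemma chiE_l x a b l : x \in B' -> l != dbl i a -> chi l (E x a b) = 0 :> K.
Proof.
move=> Bx la; rewrite -Esand // -mulrA chiM' che.
by rewrite eq_sym (negbTE la) mul0r.
Qed.

Lemma phiMentry x y a b : x \in B' -> y \in B' ->
  E (x * y) a b = \sum_c E x a c * E y c b.
Proof. by move=> Bx By; rewrite phiM // entry_comp //; apply: phi_endB. Qed.


Definition psi a := linfun (fun x : L' => (chi (dbl i a) (E x a a) : K^o)).

Lemma psiE a x : psi a x = chi (dbl i a) (E x a a).
Proof. by rewrite /psi linfunE //; apply: Elin. Qed.

Lemma entry_A x a b : x \in A -> dbl i a = dbl i b -> a != b ->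
  chi (dbl i a) (E x a b) = 0 :> K.
Proof.
rewrite hA => /and3P[_ h1 h2] dab ab.
have [eab|dai] := dbl_inj dab; first by rewrite eab eqxx in ab.
have dbi : dbl i b = i by rewrite -dab.
move: (dai) (dbi) => /eqP; rewrite dbl_eqi => /orP[] /eqP ea /eqP; 
  rewrite dbl_eqi => /orP[] /eqP eb; rewrite dai; subst a b.
- by rewrite eqxx in ab.
- exact/eqP.
- exact/eqP.
- by rewrite eqxx in ab.
Qed.

Lemma psiM a : {in A &, forall x y, psi a (x * y) = (psi a x : K) * psi a y}.
Proof.
move=> x y Ax Ay; have Bx := subvP AB' _ Ax; have By := subvP AB' _ Ay.
rewrite !psiE phiMentry // linear_sum (bigD1 a) //= big1 ?addr0 ?chiM' //.
move=> c ca; rewrite chiM'.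
case: (eqVneq (dbl i a) (dbl i c)) => [dac|dac].
  by rewrite entry_A // 1?eq_sym // mul0r.
by rewrite chiE_off // mul0r.
Qed.

Definition RA := (A :&: \bigcap_(a : 'I_m.+1) lker (psi a))%VS.

Lemma memRA x : x \in RA <-> x \in B' /\ (forall a b l, chi l (E x a b) = 0 :> K).
Proof.
split.
  case/memv_capP => Ax /memv_bigcapP Hk; have Bx := subvP AB' _ Ax.
  split => // a b l.
  case: (eqVneq l (dbl i a)) => [->|la]; last exact: chiE_l.
  case: (eqVneq (dbl i a) (dbl i b)) => [dab|dab]; last exact: chiE_off.
  case: (eqVneq a b) => [<-|ab]; last exact: entry_A.
  by have := Hk a; rewrite memv_ker psiE => /eqP.
move=> [Bx H]; apply/memv_capP; split.
  by rewrite hA Bx !H eqxx.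
by apply/memv_bigcapP => a; rewrite memv_ker psiE H.
Qed.

Lemma RA_A : (RA <= A)%VS.
Proof. exact: capvSl. Qed.

Let RBv := (fullv :&: \bigcap_(k : 'I_m) lker (chi k))%VS.

Lemma Elin2 a b : linear (fun x : L' => E x a b).
Proof. by move=> c x y; rewrite linearP /= entry_lin. Qed.

Definition Wn n := (B' :&: \bigcap_(ab : 'I_m.+1 * 'I_m.+1)
   (linfun (fun x : L' => E x ab.1 ab.2) @^-1: (RBv ^+ n)))%VS.

Lemma memWn x n : x \in Wn n <-> x \in B' /\ (forall a b, E x a b \in (RBv ^+ n)%VS).
Proof.
have eq1 a b : E x a b = linfun (fun x0 : L' => E x0 (a,b).1 (a,b).2) x.
  by rewrite linfunE //; apply: Elin2.
split.
  case/memv_capP => Bx /memv_bigcapP H; split => // a b.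
  by rewrite eq1 memv_preim; apply: H.
move=> [Bx H]; apply/memv_capP; split => //; apply/memv_bigcapP => [[a b]].
by rewrite -memv_preim -eq1 H.
Qed.

Lemma RA_Wn n : (RA ^+ n.+1 <= Wn n.+1)%VS.
Proof.
elim: n => [|n IH].
  rewrite expv1; apply/subvP => x /memRA [Bx H]; apply/memWn; split => // a b.
  by rewrite expv1 (@memRB _ _ _ chi); apply/forallP => l; rewrite H.
rewrite expvSr; apply: subv_trans (prodvSl _ IH) _.
apply/prodvP => x y /memWn [Bx Hx] /memRA [By Hy]; apply/memWn.
split; first exact: memvM.
move=> a b; rewrite phiMentry // expvSr; apply: memv_suml => c _.
apply: memv_mul; first exact: Hx.
by rewrite (@memRB _ _ _ chi); apply/forallP => l; rewrite Hy.
Qed.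

Lemma phi_eq0 x : x \in B' -> (forall a b, E x a b = 0) -> x = 0.
Proof.
move=> Bx H; apply: phi_inj0 => //; apply/lfunP => w; apply/ffunP => a.
rewrite expandE; last exact: phi_endB.
by rewrite big1 ?lfunE ?ffunE // => b _; rewrite H mul0r.
Qed.

Lemma nilRA : nilpotent_space RA.
Proof.
case: (@radB _ _ _ _ hB) => _ [N hN] _.
exists N.+1; apply/eqP; rewrite -subv0; apply/subvP => x /(subvP (RA_Wn N)).
case/memWn => Bx H; rewrite memv0; apply/eqP; apply: phi_eq0 => // a b.
by have := H a b; rewrite expvSr hN prod0v memv0 => /eqP.
Qed.


Lemma psi1 a : psi a (algid A) = 1 :> K.
Proof. by rewrite psiE algidA phi1 entry_projP eqxx che eqxx. Qed.

Lemma psi_surj (lam : 'I_m.+1 -> K) :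
  exists2 x, x \in A & forall a, psi a x = lam a :> K.
Proof.
pose M := fun c d : 'I_m.+1 => if c == d then lam c *: (1 : B) else 0.
have [x Bx px] := phi_surj (mk_endB M).
have h12 := idx12 i.
exists x.
  by rewrite hA Bx px !mk_entry /M ifN // ifN 1?eq_sym // !mulr0 !mul0r raddf0 eqxx.
move=> a; rewrite psiE px mk_entry /M eqxx -scalerAr mulr1 -scalerAl ee linearZ /= che eqxx.
by rewrite /GRing.scale /=; ring.
Qed.

Lemma memRA2 x : x \in RA <-> x \in A /\ (forall a, psi a x = 0 :> K).
Proof.
split.
  case/memv_capP => Ax /memv_bigcapP H; split => // a.
  by have := H a; rewrite memv_ker => /eqP.
move=> [Ax H]; apply/memv_capP; split => //; apply/memv_bigcapP => a.
by rewrite memv_ker H.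
Qed.

Lemma radA : is_rad A RA.
Proof.
split.
- apply/and3P; split; first exact: RA_A.
    apply/prodvP => x y Ax /memRA2 [Ay Hy]; apply/memRA2; split; first exact: memvM.
    by move=> a; rewrite psiM // Hy mulr0.
  apply/prodvP => x y /memRA2 [Ax Hx] Ay; apply/memRA2; split; first exact: memvM.
  by move=> a; rewrite psiM // Hx mul0r.
- exact: nilRA.
- move=> J /and3P[JA _ _] nJ.
  exact: (@max_gen K L' A _ psi J (fun a => @psiM a) JA nJ).
Qed.

Definition Zt (b : 'I_m.+1) (t : B) : 'End(W) :=
  mk (fun c d => if (c == b) && (d == b) then t else 0).

Lemma Zt_entry b t c d :
  entry i e c d (Zt b t) = if (c == b) && (d == b) then ek b * t * ek b else 0.
Proof.
rewrite mk_entry; case: ifP => [/andP[/eqP -> /eqP ->] //|_].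
by rewrite mulr0 mul0r.
Qed.

Lemma sum_if1 (F : 'I_m.+1 -> B) p : \sum_q (if q == p then F q else 0) = F p.
Proof. by rewrite -big_mkcond big_pred1_eq. Qed.

Lemma Zt_comp b s t : ek b * s = s -> s * ek b = s -> ek b * t = t -> t * ek b = t ->
  (Zt b s \o Zt b t)%VF = Zt b (s * t).
Proof.
move=> s1 s2 t1 t2; apply: endB_eq.
- split.
  + by move=> w hC; rewrite comp_lfunE; case: (mk_endB (fun c d => if (c == b) && (d == b) then t else 0)) => h _ _; rewrite h // linear0.
  + by move=> w; rewrite comp_lfunE; case: (mk_endB (fun c d => if (c == b) && (d == b) then s else 0)) => _ h _; apply: h.
  + move=> w y; rewrite !comp_lfunE.
    case: (mk_endB (fun c d => if (c == b) && (d == b) then t else 0)) => _ _ ->.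
    by case: (mk_endB (fun c d => if (c == b) && (d == b) then s else 0)) => _ _ ->.
- exact: mk_endB.
move=> c d; rewrite entry_comp; last exact: mk_endB.
rewrite Zt_entry; case: (eqVneq c b) => [->|cb] /=; last first.
  by rewrite big1 // => q _; rewrite Zt_entry (negbTE cb) mul0r.
rewrite (bigD1 b) //= big1 ?addr0; last first.
  by move=> q qb; rewrite Zt_entry (negbTE qb) andbF mul0r.
rewrite !Zt_entry eqxx /=; have [db|db] := eqVneq d b; last by rewrite mulr0.
rewrite s1 s2 t1 t2.
by rewrite mulrA s1 -mulrA t2.
Qed.

Lemma maxB' J : is_ideal B' J -> nilpotent_space J -> (J <= RA)%VS.
Proof.
move=> /and3P[JB BJ JB2] [N hN]; apply/subvP => x Jx; have Bx := subvP JB _ Jx.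
apply/memRA; split => // a b l.
case: (eqVneq l (dbl i a)) => [->|la]; last exact: chiE_l.
case: (eqVneq (dbl i a) (dbl i b)) => [dab|dab]; last exact: chiE_off.
set y := E x a b.
have y1 : ek b * y = y by rewrite -dab entryl //; apply: phi_endB.
have y2 : y * ek b = y by rewrite entryr //; apply: phi_endB.
pose Mu := fun c d : 'I_m.+1 => if (c == b) && (d == a) then 1 else 0 : B.
have [u Bu pu] := phi_surj (mk_endB Mu).
have [v Bv pv] := phi_surj (mk_endB (fun c d => if (c == b) && (d == b) then 1 else 0)).
have Bux : u * x \in B' by apply: memvM.
have Buxv : u * x * v \in B' by apply: memvM.
have pz : phi (u * x * v) = Zt b y.
  apply: endB_eq; [exact: phi_endB | exact: mk_endB |] => c d.
  rewrite Zt_entry phiMentry //.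
  have Eux c0 q : E (u * x) c0 q = if c0 == b then E x a q else 0.
    rewrite phiMentry //; case: (eqVneq c0 b) => [->|cb].
      rewrite (bigD1 a) //= big1 ?addr0; last first.
        by move=> p pa; rewrite pu mk_entry /Mu eqxx (negbTE pa) /= mulr0 mul0r mul0r.
      rewrite pu mk_entry /Mu !eqxx /= mulr1 -dab ee entryl //; exact: phi_endB.
    by rewrite big1 // => p _; rewrite pu mk_entry /Mu (negbTE cb) /= mulr0 mul0r mul0r.
  case: (eqVneq c b) => [->|cb] /=; last first.
    by rewrite big1 // => q _; rewrite Eux (negbTE cb) mul0r.
  rewrite (bigD1 b) //= big1 ?addr0; last first.
    by move=> q qb; rewrite pv mk_entry (negbTE qb) /= mulr0 mul0r mulr0.
  rewrite pv mk_entry eqxx /=; case: (eqVneq d b) => [->|db]; last by rewrite mulr0 mul0r mulr0.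
  by rewrite Eux eqxx mulr1 ee y2 y1 y2.
have py1 n : ek b * y ^+ n.+1 = y ^+ n.+1 by rewrite exprS mulrA y1.
have py2 n : y ^+ n.+1 * ek b = y ^+ n.+1 by rewrite exprSr -mulrA y2.
have pw n : (u * x * v) ^+ n.+1 \in B' /\ phi ((u * x * v) ^+ n.+1) = Zt b (y ^+ n.+1).
  elim: n => [|n [Bn pn]]; first by rewrite !expr1.
  rewrite exprSr; split; first exact: memvM.
  by rewrite phiM // pn pz Zt_comp // -exprSr.
have zJ : u * x * v \in J.
  apply: (subvP JB2); apply: memv_mul => //.
  by apply: (subvP BJ); apply: memv_mul.
have z0 : (u * x * v) ^+ N.+1 = 0.
  by apply/eqP; rewrite -memv0 -(prod0v J) -hN -expvSr memvX.
have [_ ] := pw N; rewrite z0 linear0 => /esym/(congr1 (entry i e b b)).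
rewrite Zt_entry eqxx /= (_ : entry i e b b 0 = 0); last by rewrite /entry lfunE /= ffunE.
rewrite py1 py2 => yN.
have := chiX (dbl i a) y N.+1; rewrite yN raddf0 => /esym/eqP.
by rewrite expf_eq0 /= => /eqP.
Qed.

Lemma radB' : is_rad B' RA.
Proof.
split.
- apply/and3P; split; first exact: subv_trans RA_A AB'.
    apply/prodvP => x y Bx /memRA [By Hy]; apply/memRA; split; first exact: memvM.
    move=> a b l; rewrite phiMentry // linear_sum big1 // => c _.
    by rewrite /= chiM' Hy mulr0.
  apply/prodvP => x y /memRA [Bx Hx] By; apply/memRA; split; first exact: memvM.
  move=> a b l; rewrite phiMentry // linear_sum big1 // => c _.
  by rewrite /= chiM' Hx mul0r.
- exact: nilRA.
- by move=> J hJ nJ; apply: maxB'.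
Qed.


Definition ii (r : 'I_2) := if r == ord0 then idx1 i else idx2 m.

Lemma dbl_ii r : dbl i (ii r) = i.
Proof. by rewrite /ii; case: ifP => _; rewrite ?dbl_idx1 ?dbl_idx2. Qed.

Lemma ii_eq r r' : (ii r == ii r') = (r == r').
Proof.
have h12 := idx12 i.
case: r => [[|[|r]] Hr] //; case: r' => [[|[|r']] Hr'] //; rewrite /ii /=.
- by rewrite eqxx; apply/esym/eqP/val_inj.
- by rewrite (negbTE h12).
- by rewrite [idx2 m == _]eq_sym (negbTE h12).
- by rewrite eqxx; apply/esym/eqP/val_inj.
Qed.

Lemma ii0 : ii ord0 = idx1 i. Proof. by []. Qed.
Lemma ii1 : ii (lift ord0 ord0) = idx2 m. Proof. by []. Qed.

Lemma ii_cases c : (dbl i c == i) = (c == ii ord0) || (c == ii (lift ord0 ord0)).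
Proof. by rewrite ii0 ii1 dbl_eqi. Qed.

Variable s : 'I_2.

Definition fcol (x : L') : 'cV[K]_2 := \col_r (chi i (E x (ii r) (ii s)) : K).

Lemma fcol_lin : linear fcol.
Proof.
move=> k x y; apply/matrixP => r c; rewrite !mxE.
by have := Elin (ii r) (ii s) i k x y.
Qed.

Definition rho (x : L') : 'M[K]_2 := \matrix_(r < 2, c < 2) (chi i (E x (ii r) (ii c)) : K).

Lemma fcol_equiv b x : b \in B' -> x \in B' -> fcol (b * x) = rho b *m fcol x.
Proof.
move=> Bb Bx; apply/matrixP => r c0; rewrite !mxE phiMentry // linear_sum /=.
rewrite (bigID (fun c => dbl i c == i)) /= [X in _ + X]big1 ?addr0; last first.
  move=> c dc; rewrite /= chiM' chiE_off ?mul0r // dbl_ii eq_sym //.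
rewrite (bigD1 (ii ord0)) ?dbl_ii ?eqxx //= (bigD1 (ii (lift ord0 ord0))) ?dbl_ii ?eqxx /=; last first.
  by rewrite ii_eq.
rewrite big1 ?addr0; last first.
  by move=> c /andP[/andP[]]; rewrite ii_cases => /orP[] -> //; rewrite andbF.
rewrite !big_ord_recl big_ord0 addr0 !mxE !chiM'.
by [].
Qed.


Lemma chi_scal (k : K) : chi i (e i * (k *: (1 : B)) * e i) = k :> K.
Proof.
rewrite -scalerAr mulr1 -scalerAl ee linearZ /= che eqxx.
by rewrite /GRing.scale /=; ring.
Qed.

Lemma ElinB k a b x y (c : K) :
  chi k (E (x - c *: y) a b) = (chi k (E x a b) : K) - c * chi k (E y a b).
Proof.
have h := Elin a b k (- c) y x; rewrite /= in h.
rewrite addrC -scaleNr h.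
by rewrite /GRing.scale /=; ring.
Qed.

Lemma qiso : quot_module_iso B' (bal_tensor_ker B' A (psi (ii s))) rho.
Proof.
have h12 := idx12 i.
exists (linfun fcol); split.
- move=> v.
  pose M := fun c d : 'I_m.+1 => if d == ii s then
     (if c == idx1 i then v 0 0 *: (1 : B) else if c == idx2 m then v 1 0 *: 1 else 0) else 0.
  have [x Bx px] := phi_surj (mk_endB M).
  exists x => //; rewrite (linfunE fcol_lin); apply/matrixP => r c.
  rewrite !mxE px mk_entry /M eqxx ord1 !dbl_ii.
  case: r => [[|[|r]] Hr] //; rewrite /ii /=.
  + by rewrite eqxx chi_scal (_ : Ordinal Hr = 0) //; apply: val_inj.
  + rewrite [idx2 m == _]eq_sym (negbTE h12) eqxx chi_scal.
    by rewrite (_ : Ordinal Hr = 1) //; apply: val_inj.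
- have [eps Beps peps] : exists2 eps, eps \in B' & phi eps = Zt (ii s) 1.
    by apply: phi_surj; apply: mk_endB.
  have Ecomp y c d : y \in B' -> E (y * eps) c d = if d == ii s then E y c (ii s) else 0.
    move=> By; rewrite phiMentry // peps (bigD1 (ii s)) //= big1 ?addr0; last first.
      by move=> p ps; rewrite Zt_entry (negbTE ps) /= mulr0.
    rewrite Zt_entry eqxx /=; case: (eqVneq d (ii s)) => [ds|ds]; last by rewrite mulr0.
    by rewrite mulr1 ee entryr //; apply: phi_endB.
  have nb1 : ((idx1 i == ii s) && (idx2 m == ii s)) = false.
    apply/negbTE/andP => [[/eqP h1 /eqP h2]]; move: h12; by rewrite h1 h2 eqxx.
  have nb2 : ((idx2 m == ii s) && (idx1 i == ii s)) = false by rewrite andbC.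
  have epsA : eps \in A by rewrite hA Beps peps !Zt_entry nb1 nb2 raddf0 eqxx.
  have psi_eps : psi (ii s) eps = 1 :> K.
    by rewrite psiE peps Zt_entry eqxx /= mulr1 ee dbl_ii che eqxx.
  pose g := linfun (fun a : L' => a - (psi (ii s) a : K) *: algid A).
  have lg : linear (fun a : L' => a - (psi (ii s) a : K) *: algid A).
    by move=> k y z; rewrite linearP scalerBr scalerA addrACA -opprD -scalerDl.
  have gE a : g a = a - (psi (ii s) a : K) *: algid A by rewrite /g linfunE.
  have Nunf : bal_tensor_ker B' A (psi (ii s)) = (B' * (g @: A))%VS by [].
  move=> x Bx; rewrite (linfunE fcol_lin) Nunf; apply/idP/idP.
  + move/eqP/matrixP => H.
    have H' r : chi i (E x (ii r) (ii s)) = 0 :> K by have := H r 0; rewrite !mxE.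
    have h0 := H' ord0; have h1 := H' (lift ord0 ord0).
    rewrite ii0 in h0; rewrite ii1 in h1.
    have xeA : x * eps \in A.
      rewrite hA memvM //= !Ecomp //.
      by case: ifP => _; case: ifP => _; rewrite ?h0 ?h1 ?raddf0 ?eqxx.
    have psixe : psi (ii s) (x * eps) = 0 :> K.
      by rewrite psiE Ecomp ?eqxx ?dbl_ii ?H'.
    have gxe : g (x * eps) = x * eps by rewrite gE psixe scale0r subr0.
    have N1 : x * eps \in (B' * (g @: A))%VS.
      have := memv_mul (memv_algid B') (memv_img g xeA).
      by rewrite gxe algidl // memvM.
    have N2 : x * (eps - algid B') \in (B' * (g @: A))%VS.
      have := memv_mul Bx (memv_img g epsA).
      by rewrite gE psi_eps scale1r algidA.
    have -> : x = x * eps - x * (eps - algid B').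
      by rewrite mulrBr (algidr Bx) opprB addrC subrK.
    exact: memvB.
  + move=> xN; apply/eqP.
    suff : x \in lker (linfun fcol) by rewrite memv_ker (linfunE fcol_lin) => /eqP.
    move: xN; apply/subvP; apply/prodvP => b v Bb /memv_imgP [a Aa ->].
    have Ba := subvP AB' _ Aa.
    have Bga : g a \in B' by rewrite gE memvB ?memvZ // algidA memv_algid.
    rewrite memv_ker (linfunE fcol_lin) fcol_equiv //; apply/eqP.
    suff -> : fcol (g a) = 0 by rewrite mulmx0.
    apply/matrixP => r c; rewrite !mxE gE ElinB algidA phi1 entry_projP ii_eq psiE dbl_ii.
    case: (eqVneq r s) => [->|rs].
      by rewrite dbl_ii che eqxx mulr1 subrr.
    rewrite raddf0 mulr0 subr0.
    have := @entry_A a (ii r) (ii s) Aa; rewrite !dbl_ii ii_eq; apply => //.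
- by move=> b x Bb Bx; rewrite !(linfunE fcol_lin) fcol_equiv.
Qed.

End Phi.

End Blow.

Unset Implicit Arguments.

Theorem proposition1p5 (K : closedFieldType) (B : falgType K) (m : nat)
    (chi : 'I_m -> 'Hom(B, K^o))
    (hB : basic_decomp {:B}%AS chi) :
  (* (1) gluing the components i and j *)
  (forall (i j : 'I_m), i != j ->
   forall A : {aspace B}, (A : {vspace B}) = lker (chi i - chi j) ->
   [/\ basic_decomp A (fun k : {k : 'I_m | k != j} => chi (val k)),
       forall R : {vspace B}, is_rad {:B}%AS R -> is_rad A R
     & quot_module_iso {:B}%AS (bal_tensor_ker {:B}%AS A (chi i))
         (fun b : B => diag_mx (\row_(r < 2)
            (if r == ord0 then (chi i b : K) else (chi j b : K))))])
  /\
  (* (2) blowing up the component i *)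
  (forall (i : 'I_m) (e : 'I_m -> B),
   (forall k l, e k * e l = (if k == l then e k else 0)) ->
   \sum_(k < m) e k = 1 ->
   (forall k l, chi l (e k) = (k == l)%:R :> K) ->
   forall (L' : falgType K) (B' : {aspace L'})
          (phi : 'Hom(L', 'End(Wsp B m))),
   is_End_of_P i e B' phi ->
   forall A : {aspace L'},
   (forall x, x \in A =
      [&& x \in B', chi i (entry i e (idx1 i) (idx2 m) (phi x)) == 0
                  & chi i (entry i e (idx2 m) (idx1 i) (phi x)) == 0]) ->
   let psi := fun a : 'I_m.+1 =>
     linfun (fun x : L' => (chi (dbl i a) (entry i e a a (phi x)) : K^o)) in
   let ii := fun r : 'I_2 => if r == ord0 then idx1 i else idx2 m in
   [/\ basic_decomp A psi,
       forall R : {vspace L'}, is_rad B' R -> is_rad A R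
     & forall s : 'I_2,
         quot_module_iso B' (bal_tensor_ker B' A (psi (ii s)))
           (fun x : L' => \matrix_(r < 2, c < 2)
              (chi i (entry i e (ii r) (ii c) (phi x)) : K))]).
Proof.
split.
- move=> i j ij A hA; exact: (@part1 K B m chi hB i j ij A hA).
- move=> i e eM e1 che L' B' phi hE A hA psi ii.
  split.
  + split.
    * exact: (psi1 eM che hE hA).
    * exact: (psiM hB eM che hE hA).
    * exact: (psi_surj eM che hE hA).
    * exact: (radA hB eM che hE hA).
  + move=> R hR; rewrite (rad_uniq hR (radB' hB eM che hE hA)).
    exact: (radA hB eM che hE hA).
  + move=> s; exact: (qiso hB eM che hE hA s).
Qed.
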